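(* For every even $n\ge4$, $$f_n(\{2,3,\dots,\tfrac n2\})=2^{n-1}+\sum_{i=1}^{n/2-1}\sum_{j=1}^{n/2-1}\binom{i+j-2}{i-1}2^{n-i-j-2}.$$
   Context: For $m\ge1$ and a set $B$ of positive integers, $f_m(B)$ denotes the number of linear orders $q$ on $[m]$ such that for every triple $i<j<k$ in $[m]$: if $j\in B$ then $i$ is not ranked last among $\{i,j,k\}$ in $q$, and if $j\notin B$ then $k$ is not ranked first among $\{i,j,k\}$ in $q$. *)

(* Defs.v *)
From mathcomp Require Import all_boot all_order all_fingroup.
Set Implicit Arguments. Unset Strict Implicit. Unset Printing Implicit Defensive.

(* [m] = {1,...,m} is encoded by 'I_m via x |-> x+1.
   A linear order q on [m] is encoded by a permutation p : {perm 'I_m},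
   where p x is the position (rank) of x in q: x comes before y iff p x < p y.
   "ranked last among {i,j,k}" = largest position; "ranked first" = smallest. *)
Definition valid_order (m : nat) (B : pred nat) (p : {perm 'I_m}) : bool :=
  [forall i : 'I_m, forall j : 'I_m, forall k : 'I_m,
     ((i < j) && (j < k)) ==>
     (if B (val j).+1
      then ~~ ((p j < p i) && (p k < p i))
      else ~~ ((p k < p i) && (p k < p j)))].

Definition f (m : nat) (B : pred nat) : nat :=
  #|[set p : {perm 'I_m} | valid_order B p]|.

(* Main.v *)
Require Import Defs.
From mathcomp Require Import all_boot all_order all_fingroup.
From mathcomp Require Import zify.


Definition Gc (s l : nat) : nat :=
  'C(s + l, s) + \sum_(b < l.-1) 2 ^ (l.-2 - b) * 'C(s + b, s).
Definition Vc (l s : nat) : nat := \sum_(a < s.-1) 2 ^ (s.-2 - a) * Gc a l.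
Definition Fc s l := Gc s l + Vc l s.

Lemma Gc_s0 s : Gc s.+1 0 = Gc s 0.
Proof. by rewrite /Gc !big_ord0 !addn0 !binn. Qed.

Lemma Gc_rec s l : Gc s.+1 l.+1 = Gc s l.+1 + Gc s.+1 l.
Proof.
rewrite /Gc /=; case: l => [|l] /=.
  by rewrite !big_ord0 !addn0 !addn1 !binSn binn addn1.
have h1 : 'C(s.+1 + l.+2, s.+1) = 'C(s.+1 + l.+1, s.+1) + 'C(s + l.+2, s).
  have -> : s.+1 + l.+2 = (s.+1 + l.+1).+1 by lia.
  by rewrite binS; congr (_ + _); congr binomial; lia.
have h2 : \sum_(b < l.+1) 2 ^ (l - b) * 'C(s.+1 + b, s.+1) =
   \sum_(b < l.+1) 2 ^ (l - b) * 'C(s + b, s) +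
   \sum_(b < l) 2 ^ (l.-1 - b) * 'C(s.+1 + b, s.+1).
  have -> : \sum_(b < l.+1) 2 ^ (l - b) * 'C(s.+1 + b, s.+1) =
   \sum_(b < l.+1) 2 ^ (l - b) * 'C(s + b, s) +
   \sum_(b < l.+1) 2 ^ (l - b) * 'C(s + b, s.+1).
    rewrite -big_split /=; apply: eq_bigr => b _.
    by rewrite addSn binS mulnDr addnC.
  congr (_ + _); rewrite big_ord_recl bin_small ?muln0 ?add0n; last by rewrite addn0.
  apply: eq_bigr => i _; rewrite (_ : (lift ord0 i : nat) = i.+1) // addnS -addSn.
  congr (2 ^ _ * _); lia.
rewrite h1 h2. set X := \sum_(b < l) _. set Y := \sum_(b < l.+1) _. set Z := binomial (s.+1 + l.+1) _. set W := binomial _ s. lia.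
Qed.

Lemma Gc0 l : Gc 0 l.+2 = 2 * Gc 0 l.+1.
Proof.
rewrite /Gc /=.
under eq_bigr do rewrite add0n bin0 muln1.
under [in RHS]eq_bigr do rewrite add0n bin0 muln1.
rewrite !bin0 big_ord_recr /= subnn expn0.
rewrite mulnDr muln1 big_distrr /=.
have -> : \sum_(i < l) 2 ^ (l - i) = \sum_(i < l) 2 * 2 ^ (l.-1 - i).
  apply: eq_bigr => i _; rewrite -expnS; congr (2 ^ _).
  have := ltn_ord i; lia.
set X := \sum_(i < l) _; lia.
Qed.

Lemma Fc0_rec l : Fc 0 l.+1 = Fc 0 l + (if l is _.+1 then Fc 0 l else 0).
Proof.
rewrite /Fc /Vc !big_ord0 !addn0.
case: l => [|l]; first by rewrite /Gc !big_ord0.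
by rewrite Gc0; lia.
Qed.

Lemma Vc_rec2 l s : Vc l s.+2 = 2 * Vc l s.+1 + Gc s l.
Proof.
rewrite /Vc /= big_ord_recr /= subnn expn0 mul1n big_distrr /=.
congr (_ + _); apply: eq_bigr => i _; rewrite mulnA -expnS; congr (2 ^ _ * _).
have := ltn_ord i; lia.
Qed.

Lemma Vc_sum l s : Vc l s.+1 = Vc l s + \sum_(t < s) Fc t l.
Proof.
elim: s => [|s IH]; first by rewrite /Vc !big_ord0.
rewrite Vc_rec2 big_ord_recr /=; move: IH; rewrite /Fc; set S := \sum_(t < s) _; lia.
Qed.

Lemma Fc_rec s l :
  Fc s.+1 l = Fc s l + \sum_(t < s) Fc t l + (if l is l'.+1 then Gc s.+1 l' else 0).
Proof.
rewrite {1}/Fc Vc_sum; set S := \sum_(t < s) _; rewrite /Fc; case: l S => [|l] S; first by rewrite Gc_s0; lia.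
rewrite Gc_rec; lia.
Qed.

Lemma Asum m : \sum_(b < m.+1) 'C(m + b, m) * 2 ^ (m - b) = 2 ^ (2 * m).
Proof.
elim: m => [|m IH]; first by rewrite big_ord_recr big_ord0.
set A := \sum_(b < m.+1) _ in IH.
have Split : \sum_(b < m.+2) 'C(m.+1 + b, m.+1) * 2 ^ (m.+1 - b) =
   \sum_(b < m.+2) 'C(m + b, m.+1) * 2 ^ (m.+1 - b) +
   \sum_(b < m.+2) 'C(m + b, m) * 2 ^ (m.+1 - b).
  by rewrite -big_split /=; apply: eq_bigr => b _; rewrite addSn binS mulnDl.
have T1 : \sum_(b < m.+2) 'C(m + b, m) * 2 ^ (m.+1 - b) = 2 * A + 'C(m + m.+1, m).
  rewrite big_ord_recr /= subnn expn0 muln1 /A big_distrr /=; congr (_ + _).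
  apply: eq_bigr => i _; rewrite mulnCA -expnS; congr (_ * 2 ^ _).
  have := ltn_ord i; lia.
have T2 : \sum_(b < m.+2) 'C(m + b, m.+1) * 2 ^ (m.+1 - b) =
          \sum_(c < m.+1) 'C(m.+1 + c, m.+1) * 2 ^ (m - c).
  rewrite big_ord_recl bin_small ?addn0 // mul0n add0n.
  apply: eq_bigr => i _; rewrite (_ : (lift ord0 i : nat) = i.+1) //.
  by rewrite addnS -addSn subSS.
have T3 : \sum_(b < m.+2) 'C(m.+1 + b, m.+1) * 2 ^ (m.+1 - b) =
   2 * \sum_(c < m.+1) 'C(m.+1 + c, m.+1) * 2 ^ (m - c) + 'C(m.+1 + m.+1, m.+1).
  rewrite big_ord_recr /= subnn expn0 muln1 big_distrr /=; congr (_ + _).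
  apply: eq_bigr => i _; rewrite mulnCA -expnS; congr (_ * 2 ^ _).
  have := ltn_ord i; lia.
have C2 : 'C(m.+1 + m.+1, m.+1) = 2 * 'C(m + m.+1, m).
  rewrite addSn binS.
  have -> : 'C(m + m.+1, m.+1) = 'C(m + m.+1, m).
    by rewrite -{1}(bin_sub (leq_addr m.+1 m)) (_ : m + m.+1 - m = m.+1) //; lia.
  lia.
move: Split T1 T2 T3 C2 IH.
set X := \sum_(b < m.+2) 'C(m.+1 + b, m.+1) * 2 ^ (m.+1 - b).
set Y := \sum_(c < m.+1) _.
set Z := \sum_(b < m.+2) 'C(m + b, m) * _.
set W := \sum_(b < m.+2) 'C(m + b, m.+1) * _.
set c1 := 'C(m + m.+1, m). set c2 := 'C(m.+1 + m.+1, m.+1).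
rewrite (_ : 2 * m.+1 = (2 * m).+2); last by lia.
rewrite !expnS. lia.
Qed.

Lemma Ident k : 'C(k.+1 + k.+1, k.+1) + 2 * \sum_(b < k) 2 ^ (k.-1 - b) * 'C(k.+1 + b, k.+1)
   = 2 ^ (2 * k.+1).-1.
Proof.
have H := Asum k.+1.
rewrite 2!big_ord_recr /= subnn in H.
rewrite (_ : k.+1 - k = 1) in H; last by lia.
have E : \sum_(i < k) 'C(k.+1 + i, k.+1) * 2 ^ (k.+1 - i) =
         4 * \sum_(b < k) 2 ^ (k.-1 - b) * 'C(k.+1 + b, k.+1).
  rewrite big_distrr /=; apply: eq_bigr => i _; rewrite mulnC mulnA.
  have -> : k.+1 - i = (k.-1 - i).+2 by have := ltn_ord i; lia.
  by rewrite !expnS mulnA.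
have C2 : 'C(k.+1 + k.+1, k.+1) = 2 * 'C(k.+1 + k, k.+1).
  rewrite addnS binS.
  have -> : 'C(k.+1 + k, k) = 'C(k.+1 + k, k.+1).
    by rewrite -{1}(bin_sub (leq_addl k.+1 k)) (_ : k.+1 + k - k = k.+1) //; lia.
  lia.
rewrite E in H; move: H C2.
have -> : (2 * k.+1).-1 = (2 * k).+1 by lia.
have -> : 2 * k.+1 = (2 * k).+2 by lia.
rewrite !expnS.
set X := \sum_(b < k) _. set c1 := 'C(k.+1 + k.+1, k.+1). set c2 := 'C(k.+1 + k, k.+1).
lia.
Qed.

Lemma final_arith m : 2 <= m -> Fc m m = 2 ^ (2 * m - 1) +
  \sum_(1 <= i < m) \sum_(1 <= j < m) 'C(i + j - 2, i - 1) * 2 ^ (2 * m - i - j - 2).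
Proof.
case: m => [//|k] Hk.
rewrite big_add1 big_mkord /=.
have -> : \sum_(i < k) \sum_(1 <= j < k.+1) 'C(i.+1 + j - 2, i.+1 - 1) * 2 ^ (2 * k.+1 - i.+1 - j - 2)
  = \sum_(a < k) \sum_(b < k) 2 ^ (k.-1 - a) * (2 ^ (k.-1 - b) * 'C(a + b, a)).
  apply: eq_bigr => a _; rewrite big_add1 big_mkord /=; apply: eq_bigr => b _.
  have -> : a.+1 + b.+1 - 2 = a + b by lia.
  have -> : a.+1 - 1 = a by lia.
  rewrite mulnCA mulnA -expnD mulnC; congr (2 ^ _ * _).
  have := ltn_ord a; have := ltn_ord b; lia.
rewrite subn1 -Ident /Fc /Vc /=.
have -> : \sum_(a < k) 2 ^ (k.-1 - a) * Gc a k.+1 =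
   \sum_(a < k) 2 ^ (k.-1 - a) * 'C(k.+1 + a, k.+1) +
   \sum_(a < k) \sum_(b < k) 2 ^ (k.-1 - a) * (2 ^ (k.-1 - b) * 'C(a + b, a)).
  rewrite -big_split /=; apply: eq_bigr => a _; rewrite /Gc /= mulnDr big_distrr /=.
  congr (_ * _ + _).
  by rewrite addnC -{1}(bin_sub (leq_addl k.+1 a)) (_ : k.+1 + a - a = k.+1) //; lia.
rewrite /Gc /=.
set X := \sum_(a < k) \sum_(b < k) _. set Y := \sum_(a < k) _.
lia.
Qed.

Definition before (w : seq nat) i k := index i w < index k w.
Definition Q2 (P : nat -> nat -> bool) (w : seq nat) := all (fun i => all (P i) w) w.
Definition Dp z w := Q2 (fun i k => ((i < k) && (i < z)) ==> before w i k) w.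
Definition Ep m w := Q2 (fun i j => ((i < j) && (j < m)) ==> before w i j) w.
Definition Cq m y w := Q2 (fun i j => ((i < j) && (j < y)) ==> (j < m) && before w i j) w.
Definition condL m y w := if y < m then Dp y w else Cq m y w.
Fixpoint validL m w := if w is y :: w' then validL m w' && condL m y w' else true.

Lemma neq_notin (y a : nat) (w : seq nat) : a \in w -> y \notin w -> (y == a) = false.
Proof. by move=> aw yw; apply/eqP=> E; rewrite E aw in yw. Qed.

Lemma before_yy y (w : seq nat) : before (y :: w) y y = false.
Proof. by rewrite /before ltnn. Qed.

Lemma before_y_l y (w : seq nat) j : j \in w -> y \notin w -> before (y :: w) y j = true.
Proof. by move=> jw yw; rewrite /before /= eqxx (neq_notin _ _ _ jw yw). Qed.

Lemma before_y_r y (w : seq nat) i : before (y :: w) i y = false.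
Proof. by rewrite /before /= eqxx ltn0. Qed.

Lemma before_cons y (w : seq nat) i j : i \in w -> j \in w -> y \notin w ->
  before (y :: w) i j = before w i j.
Proof. by move=> iw jw yw; rewrite /before /= (neq_notin _ _ _ iw yw) (neq_notin _ _ _ jw yw). Qed.

Lemma Q2_cons (R : nat -> nat -> bool -> bool) y (w : seq nat) : y \notin w ->
  Q2 (fun i j => R i j (before (y :: w) i j)) (y :: w) =
  [&& R y y false, all (fun j => R y j true) w, all (fun i => R i y false) w
    & Q2 (fun i j => R i j (before w i j)) w].
Proof.
move=> yw; rewrite /Q2 /= before_yy.
rewrite (@eq_in_all _ _ (fun j => R y j true)); last first.
  by move=> j jw; rewrite before_y_l.
rewrite [X in _ && X](@eq_in_all _ _ (fun i => R i y false && all (fun j => R i j (before w i j)) w)); last first.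
  move=> i iw /=; rewrite before_y_r; congr (_ && _).
  by apply: eq_in_all => j jw; rewrite before_cons.
by rewrite all_predI /= !andbA.
Qed.

Lemma Dp_cons z y (w : seq nat) : y \notin w ->
  Dp z (y :: w) = Dp z w && all (fun i => ~~ ((i < y) && (i < z))) w.
Proof.
move=> yw; rewrite /Dp (Q2_cons (fun i k b => ((i < k) && (i < z)) ==> b)) //.
rewrite ltnn /=.
have -> : all (fun j => ((y < j) && (y < z)) ==> true) w by apply/allP => j _; rewrite implybT.
rewrite andbC andbT andbC; congr (_ && _); apply: eq_all => i; by rewrite implybF.
Qed.

Lemma Ep_cons m y (w : seq nat) : y \notin w ->
  Ep m (y :: w) = Ep m w && ((y < m) ==> all (fun i => ~~ (i < y)) w).
Proof.
move=> yw; rewrite /Ep (Q2_cons (fun i j b => ((i < j) && (j < m)) ==> b)) //.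
rewrite ltnn /=.
have -> : all (fun j => ((y < j) && (j < m)) ==> true) w by apply/allP => j _; rewrite implybT.
rewrite andbC andbT andbC; congr (_ && _); case: (y < m) => /=.
  by apply: eq_all => i; rewrite implybF andbT.
by apply/allP => i _; rewrite andbF.
Qed.

Lemma Dp_triv z (w : seq nat) : all (fun x => z <= x) w -> Dp z w.
Proof.
move=> /allP H; apply/allP => i iw; apply/allP => k kw.
by have := H i iw; rewrite leqNgt => /negbTE ->; rewrite andbF.
Qed.

Lemma Cq_triv m y (w : seq nat) : all (fun x => y <= x) w -> Cq m y w.
Proof.
move=> /allP H; apply/allP => i iw; apply/allP => j jw.
by have := H j jw; rewrite leqNgt => /negbTE ->; rewrite andbF.
Qed.

Lemma Ep_triv m (w : seq nat) : all (fun x => m <= x) w -> Ep m w.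
Proof.
move=> /allP H; apply/allP => i iw; apply/allP => j jw.
by have := H j jw; rewrite leqNgt => /negbTE ->; rewrite andbF.
Qed.

Lemma condL_min m y (w : seq nat) : all (fun x => y < x) w -> condL m y w.
Proof.
move=> H; have H' : all (fun x => y <= x) w.
  by apply: sub_all H => x /ltnW.
by rewrite /condL; case: ifP => _; [apply: Dp_triv | apply: Cq_triv].
Qed.

Lemma Cq_Ep m b (w : seq nat) : (forall x, x \in w -> (x < b) = (x < m)) -> Cq m b w = Ep m w.
Proof.
move=> H; apply: eq_in_all => i iw; apply: eq_in_all => j jw.
rewrite (H j jw); by case: (j < m); rewrite ?andbF.
Qed.

Lemma Cq_false m y (w : seq nat) i j : i \in w -> j \in w -> i < j -> j < y -> m <= j ->
  Cq m y w = false.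
Proof.
move=> iw jw ij jy mj; apply/negbTE/negP => /allP /(_ i iw) /allP /(_ j jw).
by rewrite ij jy ltnNge mj.
Qed.

Lemma Cq_one m c b (w : seq nat) :
  (forall x, x \in w -> (b <= x) && ((x < c) ==> (x == b))) -> Cq m c w.
Proof.
move=> H; apply/allP => i iw; apply/allP => j jw; apply/implyP => /andP[ij jc].
have /andP[bi _] := H i iw; have /andP[_ /implyP /(_ jc) /eqP jb] := H j jw.
by move: ij; rewrite jb ltnNge bi.
Qed.

Lemma count_perms (P : pred (seq nat)) (Y : seq nat) : uniq Y -> 0 < size Y ->
  count P (permutations Y) =
  \sum_(y <- Y) count (fun w => P (y :: w)) (permutations (rem y Y)).
Proof.
move=> uY sY; rewrite (seq.permP (permutationsE sY)) undup_id // count_flatten.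
rewrite sumnE !big_map; apply: eq_bigr => y _; by rewrite count_map.
Qed.

Lemma sum_rank (F : nat -> nat) (S : seq nat) : sorted ltn S ->
  \sum_(y <- S) F (count (fun x => y < x) S) = \sum_(t < size S) F t.
Proof.
elim: S => [|a S IH] /=; first by rewrite big_nil big_ord0.
move=> pS; have sS := path_sorted pS; have aS := order_path_min ltn_trans pS.
rewrite big_cons big_ord_recr /= addnC; congr (_ + _).
  rewrite -IH //; apply: eq_big_seq => y yS.
  by have := allP aS y yS => ay; rewrite ltnNge (ltnW ay).
by move: aS; rewrite all_count => /eqP ->; rewrite ltnn.
Qed.
Set Implicit Arguments. Unset Strict Implicit.

Definition inv m (S L : seq nat) :=
  [&& sorted ltn S, sorted ltn L, all (fun x => x < m) S & all (fun x => m <= x) L].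

Definition cF m Y := count (validL m) (permutations Y).
Definition cG m Y := count (fun w => validL m w && Ep m w) (permutations Y).
Definition cD m z Y := count (fun w => validL m w && Dp z w) (permutations Y).

Definition Claim m (S L : seq nat) :=
  [/\ cF m (S ++ L) = Fc (size S) (size L),
      cG m (S ++ L) = Gc (size S) (size L)
    & forall z, z < m -> z \notin S ->
        cD m z (S ++ L) = Fc (count (fun x => z < x) S) (size L)].

Definition IHt m N := forall S L, size S + size L = N -> inv m S L -> Claim m S L.

Lemma rem_cat_l (y : nat) S L : y \in S -> rem y (S ++ L) = rem y S ++ L.
Proof.
elim: S => [//|a S IH] /=; rewrite in_cons => yS.
case E: (a == y) => //=.
by rewrite IH //; move: yS; rewrite eq_sym E.
Qed.

Lemma rem_cat_r (y : nat) S L : y \notin S -> rem y (S ++ L) = S ++ rem y L.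
Proof.
elim: S => [//|a S IH] /=; rewrite inE negb_or => /andP[ya yS].
by rewrite eq_sym (negbTE ya) IH.
Qed.

Lemma term_eq (P Q : pred (seq nat)) (y : nat) X X' : X' = X ->
  (forall w, perm_eq w X -> P (y :: w) = Q w) ->
  count (fun w => P (y :: w)) (permutations X') = count Q (permutations X).
Proof. by move=> -> H; apply: eq_in_count => w; rewrite mem_permutations => /H. Qed.

Lemma term0 (P : pred (seq nat)) (y : nat) X X' : X' = X ->
  (forall w, perm_eq w X -> P (y :: w) = false) ->
  count (fun w => P (y :: w)) (permutations X') = 0.
Proof.
move=> -> H; rewrite (@eq_in_count _ _ pred0) ?count_pred0 // => w.
by rewrite mem_permutations => /H.
Qed.

Lemma term0' (P : pred (seq nat)) (y : nat) X :
  (forall w, perm_eq w X -> P (y :: w) = false) ->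
  count (fun w => P (y :: w)) (permutations X) = 0.
Proof. by move=> H; apply: (term0 (erefl X)). Qed.

Lemma inv_uniq m S L : inv m S L -> uniq (S ++ L).
Proof.
case/and4P => sS sL aS aL; rewrite cat_uniq (sorted_uniq ltn_trans ltnn sS).
rewrite (sorted_uniq ltn_trans ltnn sL) /= andbT.
apply/hasPn => x xL; apply/negP => xS.
by have := allP aS x xS; have := allP aL x xL; rewrite leqNgt => /negbTE ->.
Qed.

Lemma mem_pw (w X : seq nat) x : perm_eq w X -> (x \in w) = (x \in X).
Proof. by move/perm_mem => ->. Qed.

Lemma F_step m N : IHt m N -> forall S L, size S + size L = N.+1 -> inv m S L ->
  cF m (S ++ L) = Fc (size S) (size L).
Proof.
move=> IH S L HN Hinv.
have uY := inv_uniq Hinv.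
case/and4P: (Hinv) => sS sL aS aL.
rewrite /cF count_perms //; last by rewrite size_cat HN.
case: S HN Hinv uY sS aS => [|a S'] HN Hinv uY sS aS.
  case: L HN Hinv uY sL aL => [//|b L'] HN Hinv uY sL aL.
  have bL' := order_path_min ltn_trans sL.
  have sL' := path_sorted sL.
  rewrite cat0s big_cons.
  have -> : count (fun w => validL m (b :: w)) (permutations (rem b (b :: L'))) = cF m L'.
    apply: term_eq => [|w pw]; first by rewrite /= eqxx.
    rewrite /= condL_min ?andbT //; apply/allP => x; rewrite (mem_pw _ pw).
    by move/(allP bL').
  have [E1 _ _] : Claim m [::] L'.
    apply: IH; first by move: HN => /= /eqP; rewrite eqSS => /eqP.
    by rewrite /inv /= sL'; case/andP: aL.
  rewrite /= in E1; rewrite E1.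
  case: L' HN Hinv uY sL aL bL' sL' E1 => [|c L''] HN Hinv uY sL aL bL' sL' E1.
    by rewrite big_nil addn0 /= Fc0_rec addn0.
  rewrite big_cons.
  have -> : count (fun w => validL m (c :: w)) (permutations (rem c (b :: c :: L''))) =
            cF m (b :: L'').
    apply: term_eq => [|w pw].
      by rewrite /= eqxx; case: eqP => // E; move: bL' => /=; rewrite E ltnn.
    rewrite /= /condL.
    have cm : m <= c by move: aL => /= /and3P[].
    rewrite ltnNge cm /= (@Cq_one _ _ b) ?andbT // => x; rewrite (mem_pw _ pw) inE.
    case/orP => [/eqP -> | xL]; first by rewrite leqnn eqxx implybT.
    have cL'' := order_path_min ltn_trans (path_sorted sL).
    have cx := allP cL'' x xL; have bx : b < x by move: bL' => /= /andP[bc _]; lia.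
    by rewrite (ltnW bx) /= ltnNge (ltnW cx).
  have [E2 _ _] : Claim m [::] (b :: L'').
    apply: IH; first by move: HN => /= /eqP; rewrite eqSS => /eqP.
    have sbL : sorted ltn (b :: L'').
      by apply: (subseq_sorted ltn_trans _ sL); exact: (cat_subseq (subseq_refl [:: b]) (subseq_cons L'' c)).
    by rewrite /inv /=; move: aL sbL => /= /and3P[-> _ ->] ->.
  rewrite /= in E2; rewrite E2.
  have bc : b < c by move: bL' => /andP[].
  have cm : m <= c by move: aL => /= /and3P[].
  rewrite big1_seq ?addn0; first by rewrite /= (Fc0_rec (size L'').+1).
  move=> y /andP[_ yL].
  have cy : c < y := allP (order_path_min ltn_trans (path_sorted sL)) y yL.
  apply: term0' => w pw.
  rewrite /= /condL ltnNge (leq_trans cm (ltnW cy)) /= (@Cq_false m y w b c) ?andbF //.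
    by rewrite (mem_pw _ pw) rem_mem ?inE ?eqxx // (ltn_eqF (ltn_trans bc cy)).
  by rewrite (mem_pw _ pw) rem_mem ?inE ?eqxx ?orbT // (ltn_eqF cy).
have aS' := order_path_min ltn_trans sS; have sS' := path_sorted sS.
have am : a < m by case/andP: aS.
have aS'm : all (fun x => x < m) S' by case/andP: aS.
have HN' : size S' + size L = N by move: HN; rewrite /= addSn => /eqP; rewrite eqSS => /eqP.
rewrite cat_cons big_cons big_cat.
have -> : count (fun w => validL m (a :: w)) (permutations (rem a (a :: S' ++ L))) =
          cF m (S' ++ L).
  apply: term_eq => [|w pw]; first by rewrite /= eqxx.
  rewrite /= condL_min ?andbT //; apply/allP => x; rewrite (mem_pw _ pw) mem_cat.
  case/orP => [/(allP aS') //| /(allP aL) mx]; exact: leq_trans am mx.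
have [E1 _ _] : Claim m S' L.
  by apply: IH => //; rewrite /inv sS' sL aS'm aL.
rewrite E1.
rewrite (@eq_big_seq _ _ _ _ _ _ (fun y => Fc (count (fun x => y < x) S') (size L))); last first.
  move=> y yS'.
  have ay : a < y := allP aS' y yS'.
  have ym : y < m := allP aS'm y yS'.
  have E : rem y (a :: S' ++ L) = (a :: rem y S') ++ L.
    by rewrite rem_cons (ltn_eqF ay) rem_cat_l.
  rewrite (term_eq (Q := fun w => validL m w && Dp y w) E); last first.
    by move=> w pw; rewrite /= /condL ym.
  have sz : size (a :: rem y S') = size S'.
    by rewrite /= size_rem //; case: (S') yS'.
  have inv' : inv m (a :: rem y S') L.
    rewrite /inv sL aL andbT /=; apply/andP; split.
      have := subseq_sorted ltn_trans (rem_subseq y (a :: S')) sS.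
      by rewrite rem_cons (ltn_eqF ay).
    by rewrite am; apply/allP => x /mem_rem /(allP aS'm).
  have [_ _ E3] := IH _ _ (etrans (congr1 (addn^~ (size L)) sz) HN') inv'.
  rewrite -/(cD m y _) E3 //.
    congr Fc; rewrite /= ltnNge (ltnW ay) add0n count_rem.
    by rewrite yS' ltnn andbF subn0.
  rewrite inE negb_or eq_sym (ltn_eqF ay) /= mem_rem_uniqF //.
  by apply: (sorted_uniq ltn_trans ltnn).
rewrite (sum_rank (fun t => Fc t (size L))) //.
case: L HN Hinv uY sL aL HN' E1 => [|b L'] HN Hinv uY sL aL HN' E1.
  by rewrite big_nil /= addn0 Fc_rec addn0.
rewrite big_cons.
have mb : m <= b by case/andP: aL.
have ab : a < b by apply: leq_trans am mb.
have bS' : b \notin S'.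
  by apply/negP => /(allP aS'm); rewrite ltnNge mb.
have E : rem b (a :: S' ++ b :: L') = (a :: S') ++ L'.
  by rewrite rem_cons (ltn_eqF ab) rem_cat_r // rem_cons eqxx.
have bL' := order_path_min ltn_trans sL.
rewrite (term_eq (Q := fun w => validL m w && Ep m w) E); last first.
  move=> w pw; rewrite /= /condL ltnNge mb /= Cq_Ep // => x; rewrite (mem_pw _ pw).
  rewrite mem_cat; case/orP => [xS | xL].
    have xm : x < m by move: xS; rewrite inE => /orP[/eqP -> //|/(allP aS'm)].
    by rewrite xm (leq_trans xm mb).
  have bx := allP bL' x xL; have mx : m <= x by apply: leq_trans mb (ltnW bx).
  by rewrite ltnNge (ltnW bx) ltnNge mx.
have [_ E2 _] : Claim m (a :: S') L'.
  apply: IH; first by move: HN'; rewrite /= addnS.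
  by rewrite /inv sS (path_sorted sL) aS; case/andP: aL.
rewrite -/(cG m _) E2.
have -> : \sum_(j <- L') count (fun w => validL m (j :: w))
             (permutations (rem j (a :: S' ++ b :: L'))) = 0.
  apply: big1_seq => y /andP[_ yL].
  have bY := allP bL' y yL.
  apply: term0' => w pw.
  rewrite /= /condL ltnNge (leq_trans mb (ltnW bY)) /= (@Cq_false m y w a b) ?andbF //.
    by rewrite (mem_pw _ pw) rem_mem ?inE ?eqxx // (ltn_eqF (ltn_trans ab bY)).
  by rewrite (mem_pw _ pw) rem_mem ?(ltn_eqF bY) // !(inE, mem_cat) eqxx !orbT.
by rewrite /= addn0 Fc_rec addnA.
Qed.

Lemma G_step m N : IHt m N -> forall S L, size S + size L = N.+1 -> inv m S L ->
  cG m (S ++ L) = Gc (size S) (size L).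
Proof.
move=> IH S L HN Hinv.
have uY := inv_uniq Hinv.
case/and4P: (Hinv) => sS sL aS aL.
case: S HN Hinv uY sS aS => [|a S'] HN Hinv uY sS aS.
  have -> : Gc 0 (size L) = Fc 0 (size L) by rewrite /Fc /Vc big_ord0 addn0.
  rewrite -(F_step IH HN Hinv).
  apply: eq_in_count => w; rewrite mem_permutations => pw.
  by rewrite Ep_triv ?andbT //; apply/allP => x; rewrite (mem_pw _ pw) => /(allP aL).
rewrite /cG count_perms //.
have aS' := order_path_min ltn_trans sS; have sS' := path_sorted sS.
have am : a < m by case/andP: aS.
have aS'm : all (fun x => x < m) S' by case/andP: aS.
have HN' : size S' + size L = N by move: HN; rewrite /= addSn => /eqP; rewrite eqSS => /eqP.
rewrite cat_cons big_cons big_cat.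
have -> : count (fun w => validL m (a :: w) && Ep m (a :: w))
             (permutations (rem a (a :: S' ++ L))) = cG m (S' ++ L).
  apply: (term_eq (P := fun w => validL m w && Ep m w) (Q := fun w => validL m w && Ep m w)) => [|w pw]; first by rewrite /= eqxx.
  have aw : all (fun x => a < x) w.
    apply/allP => x; rewrite (mem_pw _ pw) mem_cat.
    case/orP => [/(allP aS') //| /(allP aL) mx]; exact: leq_trans am mx.
  have anw : a \notin w by apply/negP => /(allP aw); rewrite ltnn.
  rewrite /= condL_min // andbT Ep_cons // am /=.
  have -> : all (fun i => ~~ (i < a)) w.
    by apply/allP => x /(allP aw) ax; rewrite ltnNge (ltnW ax).
  by rewrite andbT.
have [_ E1 _] : Claim m S' L.
  by apply: IH => //; rewrite /inv sS' sL aS'm aL.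
rewrite E1.
have -> : \sum_(y <- S') count (fun w => validL m (y :: w) && Ep m (y :: w))
             (permutations (rem y (a :: S' ++ L))) = 0.
  apply: big1_seq => y /andP[_ yS'].
  have ay : a < y := allP aS' y yS'.
  have ym : y < m := allP aS'm y yS'.
  apply: (term0' (P := fun w => validL m w && Ep m w)) => w pw.
  have ynw : y \notin w by rewrite (mem_pw _ pw) mem_rem_uniqF.
  rewrite Ep_cons // ym /=; apply/negbTE; rewrite !negb_and; apply/orP; right; apply/orP; right.
  apply/allPn; exists a; last by rewrite ay.
  by rewrite (mem_pw _ pw) rem_mem ?inE ?eqxx // (ltn_eqF ay).
case: L HN Hinv uY sL aL HN' E1 => [|b L'] HN Hinv uY sL aL HN' E1.
  by rewrite big_nil /= !addn0 Gc_s0.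
rewrite big_cons.
have mb : m <= b by case/andP: aL.
have ab : a < b by apply: leq_trans am mb.
have bS' : b \notin S'.
  by apply/negP => /(allP aS'm); rewrite ltnNge mb.
have E : rem b (a :: S' ++ b :: L') = (a :: S') ++ L'.
  by rewrite rem_cons (ltn_eqF ab) rem_cat_r // rem_cons eqxx.
have bL' := order_path_min ltn_trans sL.
rewrite (term_eq (P := fun w => validL m w && Ep m w) (Q := fun w => validL m w && Ep m w) E); last first.
  move=> w pw.
  have bnw : b \notin w.
    rewrite (mem_pw _ pw) -E mem_rem_uniqF //.
  rewrite Ep_cons // ltnNge mb /= andbT /condL ltnNge mb /= Cq_Ep.
    by rewrite -andbA andbb.
  move=> x; rewrite (mem_pw _ pw).
  rewrite mem_cat; case/orP => [xS | xL].
    have xm : x < m by move: xS; rewrite inE => /orP[/eqP -> //|/(allP aS'm)].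
    by rewrite xm (leq_trans xm mb).
  have bx := allP bL' x xL; have mx : m <= x by apply: leq_trans mb (ltnW bx).
  by rewrite ltnNge (ltnW bx) ltnNge mx.
have [_ E2 _] : Claim m (a :: S') L'.
  apply: IH; first by move: HN'; rewrite /= addnS.
  by rewrite /inv sS (path_sorted sL) aS; case/andP: aL.
rewrite -/(cG m _) E2.
have -> : \sum_(j <- L') count (fun w => validL m (j :: w) && Ep m (j :: w))
             (permutations (rem j (a :: S' ++ b :: L'))) = 0.
  apply: big1_seq => y /andP[_ yL].
  have bY := allP bL' y yL.
  apply: (term0' (P := fun w => validL m w && Ep m w)) => w pw.
  rewrite /= /condL ltnNge (leq_trans mb (ltnW bY)) /= (@Cq_false m y w a b) ?andbF //.
    by rewrite (mem_pw _ pw) rem_mem ?inE ?eqxx // (ltn_eqF (ltn_trans ab bY)).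
  by rewrite (mem_pw _ pw) rem_mem ?(ltn_eqF bY) // !(inE, mem_cat) eqxx !orbT.
by rewrite /= !addn0 Gc_rec addnC.
Qed.

Lemma D_step m N : IHt m N -> forall S L, size S + size L = N.+1 -> inv m S L ->
  forall z, z < m -> z \notin S ->
  cD m z (S ++ L) = Fc (count (fun x => z < x) S) (size L).
Proof.
move=> IH S L HN Hinv z zm zS.
have uY := inv_uniq Hinv.
case/and4P: (Hinv) => sS sL aS aL.
have [allz | notall] := boolP (all (fun x => z < x) S).
  move: (allz); rewrite all_count => /eqP ->.
  rewrite -(F_step IH HN Hinv).
  apply: eq_in_count => w; rewrite mem_permutations => pw.
  rewrite Dp_triv ?andbT //; apply/allP => x; rewrite (mem_pw _ pw) mem_cat.
  case/orP => [/(allP allz) /ltnW // | /(allP aL) mx]; exact: leq_trans (ltnW zm) mx.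
case: S HN Hinv uY sS aS zS notall => [//|a S'] HN Hinv uY sS aS zS notall.
have aS' := order_path_min ltn_trans sS; have sS' := path_sorted sS.
have az : a < z.
  rewrite ltn_neqAle; move: zS; rewrite inE negb_or eq_sym => /andP[-> _] /=.
  move: notall; apply: contraR; rewrite -ltnNge => za /=; rewrite za /=.
  by apply/allP => x /(allP aS') /(ltn_trans za).
have am : a < m by case/andP: aS.
have aS'm : all (fun x => x < m) S' by case/andP: aS.
have HN' : size S' + size L = N by move: HN; rewrite /= addSn => /eqP; rewrite eqSS => /eqP.
rewrite /cD count_perms // cat_cons big_cons.
have -> : count (fun w => validL m (a :: w) && Dp z (a :: w))
             (permutations (rem a (a :: S' ++ L))) = cD m z (S' ++ L).
  apply: (term_eq (P := fun w => validL m w && Dp z w) (Q := fun w => validL m w && Dp z w)).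
    by rewrite /= eqxx.
  move=> w pw.
  have aw : all (fun x => a < x) w.
    apply/allP => x; rewrite (mem_pw _ pw) mem_cat.
    case/orP => [/(allP aS') //| /(allP aL) mx]; exact: leq_trans am mx.
  have anw : a \notin w by apply/negP => /(allP aw); rewrite ltnn.
  rewrite /= condL_min // andbT Dp_cons //.
  have -> : all (fun i => ~~ ((i < a) && (i < z))) w.
    by apply/allP => x /(allP aw) ax; rewrite ltnNge (ltnW ax).
  by rewrite andbT.
have [_ _ E1] : Claim m S' L.
  by apply: IH => //; rewrite /inv sS' sL aS'm aL.
rewrite E1; last by move: zS; rewrite inE negb_or => /andP[].
  2: done.
have -> : \sum_(y <- S' ++ L) count (fun w => validL m (y :: w) && Dp z (y :: w))
             (permutations (rem y (a :: S' ++ L))) = 0.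
  apply: big1_seq => y /andP[_ yY].
  have ay : a < y.
    move: yY; rewrite mem_cat => /orP[/(allP aS') //|/(allP aL) my].
    exact: leq_trans am my.
  apply: (term0' (P := fun w => validL m w && Dp z w)) => w pw.
  have ynw : y \notin w by rewrite (mem_pw _ pw) mem_rem_uniqF.
  rewrite Dp_cons //; apply/negbTE; rewrite !negb_and; apply/orP; right; apply/orP; right.
  apply/allPn; exists a; last by rewrite ay az.
  by rewrite (mem_pw _ pw) rem_mem ?inE ?eqxx // (ltn_eqF ay).
by rewrite addn0 /= ltnNge (ltnW az).
Qed.

Lemma main_count m N : IHt m N.
Proof.
elim: N => [|N IH] S L.
  case: S => [|//]; case: L => [|//] _ _.
  split; first by rewrite /cF /= /Fc /Vc /Gc !big_ord0.
    by rewrite /cG /= /Gc !big_ord0.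
  by move=> z _ _; rewrite /cD /= /Fc /Vc /Gc !big_ord0.
move=> HN Hinv; split.
- exact: (F_step IH HN Hinv).
- exact: (G_step IH HN Hinv).
- exact: (D_step IH HN Hinv).
Qed.

Definition tri m (w : seq nat) i j k :=
  if j < m then ~~ (before w j i && before w k i) else ~~ (before w k i && before w k j).
Definition Q3T m (w : seq nat) :=
  all (fun i => all (fun j => all (fun k => ((i < j) && (j < k)) ==> tri m w i j k) w) w) w.

Lemma before_asym (w : seq nat) i k : i \in w -> k \in w -> i != k ->
  before w k i = ~~ before w i k.
Proof.
move=> iw kw ik; rewrite /before; case: ltngtP => // E.
case/negP: ik; apply/eqP.
by rewrite -(nth_index 0 iw) -E nth_index.
Qed.

Lemma Q3T_cons m y (w : seq nat) : y \notin w -> Q3T m (y :: w) = Q3T m w && condL m y w.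
Proof.
move=> yw; have neq : forall x, x \in w -> x != y.
  by move=> x xw; apply/eqP => E; rewrite -E xw in yw.
apply/idP/idP.
- move=> H.
  have H3 : forall i j k, i \in y :: w -> j \in y :: w -> k \in y :: w -> i < j -> j < k ->
      tri m (y :: w) i j k.
    move=> i j k hi hj hk ij jk.
    by have := allP (allP (allP H i hi) j hj) k hk; rewrite ij jk.
  apply/andP; split.
    apply/allP => i iw; apply/allP => j jw; apply/allP => k kw; apply/implyP => /andP[ij jk].
    have := H3 i j k; rewrite !inE iw jw kw !orbT => /(_ isT isT isT ij jk).
    by rewrite /tri !before_cons.
  rewrite /condL; case: ifP => ym.
    apply/allP => i iw; apply/allP => k kw; apply/implyP => /andP[ik iy].
    have ky := neq k kw.
    case: (ltngtP k y) => [kly | ylk | E]; last by rewrite E eqxx in ky.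
      have := H3 i k y; rewrite !inE iw kw eqxx !orbT => /(_ isT isT isT ik kly).
      rewrite /tri (ltn_trans kly ym) before_y_l // before_cons // andbT.
      by rewrite before_asym // ?negbK // neq_ltn ik.
    have := H3 i y k; rewrite !inE iw kw eqxx !orbT => /(_ isT isT isT iy ylk).
    rewrite /tri ym before_y_l // before_cons // /=.
    by rewrite before_asym // ?negbK // neq_ltn ik.
  apply/allP => i iw; apply/allP => j jw; apply/implyP => /andP[ij jy].
  have := H3 i j y; rewrite !inE iw jw eqxx !orbT => /(_ isT isT isT ij jy).
  rewrite /tri before_y_l // before_y_l // before_cons //; case: (j < m) => //= h.
  by move: h; rewrite andbT before_asym // ?negbK // neq_ltn ij.
- case/andP => H1 H2.
  apply/allP => i hi; apply/allP => j hj; apply/allP => k hk; apply/implyP => /andP[ij jk].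
  move: hi hj hk; rewrite !in_cons.
  case/predU1P => [Ei|iw].
    by rewrite /tri Ei !before_y_r; case: ifP.
  case/predU1P => [Ej|jw].
    move=> hk; have kw : k \in w.
      by move: hk => /predU1P [Ek|//]; move: jk ij; rewrite Ek Ej; lia.
    rewrite /tri Ej; move: H2; rewrite /condL; case: ifP => ym H2.
      rewrite before_y_l // before_cons //= before_asym // ?negbK //.
        have := allP (allP H2 i iw) k kw; rewrite -Ej (ltn_trans ij jk) ij => /implyP; apply.
        done.
      by rewrite neq_ltn (ltn_trans ij jk).
    by rewrite before_y_r andbF.
  case/predU1P => [Ek|kw].
    have ijw : before w i j.
      move: H2; rewrite /condL; case: ifP => ym H2.
        by have := allP (allP H2 i iw) j jw; rewrite ij (ltn_trans ij (leq_trans jk _)) -?Ek //=.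
      by have := allP (allP H2 i iw) j jw; rewrite ij -Ek jk /= => /andP[].
    rewrite /tri Ek before_y_l // before_y_l // before_cons // andbT.
    case: ifP => jm.
      by rewrite before_asym // ?negbK // neq_ltn ij.
    exfalso; move: H2; rewrite /condL; case: ifP => ym H2.
      have : j < m by apply: ltn_trans jk _; rewrite Ek.
      by rewrite jm.
    by have := allP (allP H2 i iw) j jw; rewrite ij -Ek jk jm.
  have := allP (allP (allP H1 i iw) j jw) k kw; rewrite ij jk /=.
  by rewrite /tri !before_cons.
Qed.

Lemma Q3T_valid m (w : seq nat) : uniq w -> Q3T m w = validL m w.
Proof.
elim: w => [//|y w IH] /= /andP[yw uw].
by rewrite Q3T_cons // IH.
Qed.

Definition toL n (p : {perm 'I_n}) : seq nat := [seq val ((p^-1)%g k) | k <- enum 'I_n].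

Lemma index_toL n (p : {perm 'I_n}) x : index (val x) (toL p) = val (p x).
Proof.
rewrite /toL -{1}(permK p x).
have inj : injective (fun k : 'I_n => val ((p^-1)%g k)).
  by move=> a b /val_inj /perm_inj.
by rewrite (index_map inj) index_enum_ord.
Qed.

Lemma mem_toL n (p : {perm 'I_n}) a : (a \in toL p) = (a < n).
Proof.
apply/mapP/idP; first by case=> k _ ->; apply: ltn_ord.
move=> an; exists (p (Ordinal an)); first by rewrite mem_enum.
by rewrite permK.
Qed.

Lemma uniq_toL n (p : {perm 'I_n}) : uniq (toL p).
Proof.
by rewrite map_inj_uniq ?enum_uniq // => a b /val_inj /perm_inj.
Qed.

Lemma size_toL n (p : {perm 'I_n}) : size (toL p) = n.
Proof. by rewrite size_map size_enum_ord. Qed.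

Lemma Bj m j : 0 < j -> (2 <= j.+1 <= m) = (j < m).
Proof. by case: j. Qed.

Lemma valid_bridge n (p : {perm 'I_n}) :
  valid_order (fun x => 2 <= x <= n./2) p = Q3T n./2 (toL p).
Proof.
apply/idP/idP.
- move=> /forallP H; apply/allP => a; rewrite mem_toL => ha.
  apply/allP => b; rewrite mem_toL => hb; apply/allP => c; rewrite mem_toL => hc.
  apply/implyP => /andP[ab bc].
  move: (H (Ordinal ha)) => /forallP /(_ (Ordinal hb)) /forallP /(_ (Ordinal hc)) /=.
  rewrite ab bc /= Bj; last by apply: leq_ltn_trans ab.
  have ia := index_toL p (Ordinal ha); have ib := index_toL p (Ordinal hb).
  have ic := index_toL p (Ordinal hc); rewrite /= in ia ib ic.
  by rewrite /tri /before ia ib ic.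
- move=> H; apply/forallP => i; apply/forallP => j; apply/forallP => k.
  apply/implyP => /andP[ij jk].
  have hi : val i \in toL p by rewrite mem_toL ltn_ord.
  have hj : val j \in toL p by rewrite mem_toL ltn_ord.
  have hk : val k \in toL p by rewrite mem_toL ltn_ord.
  have := allP (allP (allP H _ hi) _ hj) _ hk.
  rewrite ij jk /= Bj; last by apply: leq_ltn_trans ij.
  by rewrite /tri /before !index_toL.
Qed.

Lemma toL_inj n : injective (@toL n).
Proof.
move=> p q E; apply/permP => x; apply/val_inj.
by rewrite -!index_toL E.
Qed.

Lemma f_count n :
  f n (fun x => 2 <= x <= n./2) = count (validL n./2) (permutations (iota 0 n)).
Proof.
rewrite /f cardE -size_filter.
rewrite -(size_map (@toL n)); apply: perm_size; apply: uniq_perm.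
- by rewrite map_inj_uniq ?enum_uniq //; apply: toL_inj.
- by rewrite filter_uniq // permutations_uniq.
move=> w; apply/mapP/idP.
- case=> p; rewrite mem_enum inE => Hp ->.
  rewrite mem_filter -Q3T_valid ?uniq_toL // -valid_bridge Hp /=.
  rewrite mem_permutations; apply: uniq_perm; rewrite ?uniq_toL ?iota_uniq // => a.
  by rewrite mem_toL mem_iota.
- rewrite mem_filter mem_permutations => /andP[vw pw].
  have sw : size w = n by rewrite (perm_size pw) size_iota.
  have mw : forall a, (a \in w) = (a < n) by move=> a; rewrite (perm_mem pw) mem_iota.
  have ix : forall x : 'I_n, index (val x) w < n.
    by move=> x; have := index_mem (val x) w; rewrite sw mw ltn_ord.
  pose g (x : 'I_n) := Ordinal (ix x).
  have ginj : injective g.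
    move=> x y /(congr1 val) /= E; apply/val_inj.
    have hx : val x \in w by rewrite mw ltn_ord.
    have hy : val y \in w by rewrite mw ltn_ord.
    by rewrite -(nth_index 0 hx) E nth_index.
  have E : toL (perm ginj) = w.
    apply: (@eq_from_nth _ 0); first by rewrite size_toL sw.
    move=> k; rewrite size_toL => kn.
    rewrite /toL (nth_map (Ordinal kn)) ?size_enum_ord //.
    have -> : nth (Ordinal kn) (enum 'I_n) k = Ordinal kn.
      by apply/val_inj; rewrite /= nth_enum_ord.
    set v := ((perm ginj)^-1)%g (Ordinal kn).
    have : g v = Ordinal kn by rewrite -permE /v permKV.
    move/(congr1 val) => /= <-; rewrite nth_index // mw; exact: ltn_ord.
  exists (perm ginj); last by rewrite E.
  by rewrite mem_enum inE valid_bridge Q3T_valid ?uniq_toL // E.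
Qed.

Theorem proposition7 (n : nat) (Hev : ~~ odd n) (Hn : 4 <= n) :
  f n (fun x => 2 <= x <= n./2) =
  2 ^ (n - 1) +
  \sum_(1 <= i < n./2) \sum_(1 <= j < n./2)
     'C(i + j - 2, i - 1) * 2 ^ (n - i - j - 2).
Proof.
rewrite f_count.
have En : 2 * n./2 = n.
  by have := odd_double_half n; rewrite (negbTE Hev) add0n -muln2 mulnC.
have [m Em] : exists m, n = 2 * m by exists n./2.
rewrite Em mul2n doubleK in Hn *; rewrite -mul2n.
have Hinv : inv m (iota 0 m) (iota m m).
  rewrite /inv !iota_ltn_sorted /=; apply/andP; split; apply/allP => x; rewrite mem_iota //.
  by case/andP.
have [E _ _] := main_count (erefl _) Hinv.
rewrite /cF !size_iota -iotaD addnn -mul2n in E; rewrite E.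
rewrite final_arith //; lia.
Qed.
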